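(* Consider the following constrained Bayesian persuasion setting. There is a finite state space $\Theta$, a finite action space $A=\{a_1,\dots,a_m\}$, a finite signal space $\Sigma$ with $|\Sigma|\ge |A|$, a common prior $\mu\in\Delta(\Theta)$, a sender utility $u_S:\Theta\times A\to\mathbb{R}$ and a receiver utility $u_R:\Theta\times A\to\mathbb{R}$. For each action $a_i$ there are bounds $0\le \ell_{a_i}\le h_{a_i}\le 1$, and these constraints are implementable, i.e. $\sum_i \ell_{a_i}\le 1\le \sum_i h_{a_i}$. Then for every signaling scheme $\hat\varphi:\Theta\to\Delta(\Sigma)$ there exists a signaling scheme $\varphi:\Theta\to\Delta(\Sigma)$ such that the sender's expected utility under $\varphi$ (against the receiver's constrained best response) is at least his expected utility under $\hat\varphi$ (against the receiver's constrained best response), and such that the receiver's constrained best response to $\varphi$ is deterministic (each signal is mapped to a single action with probability one). In particular, there exists a sender-optimal signaling scheme under which the receiver responds deterministically.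
   Context: A signaling scheme $\varphi:\Theta\to\Delta(\Sigma)$ is committed to by the sender before observing the state $\theta\sim\mu$; after observing $\theta$ the sender sends a signal $\sigma\sim\varphi(\theta)$. Write $\varphi(\sigma_j\mid\theta_i)$ for the probability of sending $\sigma_j$ in state $\theta_i$ and $\varphi(\sigma_j)=\sum_i\mu(\theta_i)\varphi(\sigma_j\mid\theta_i)$. A receiver strategy is a randomized mapping $\pi:\Sigma\to\Delta(A)$; write $\pi_{i j}$ for the probability that the receiver plays $a_i$ upon observing $\sigma_j$. The receiver is constrained: her strategy must satisfy, for every action $a_i$, $\ell_{a_i}\le \sum_j \varphi(\sigma_j)\,\pi_{ij}\le h_{a_i}$ (the probability of playing $a_i$, over the randomness of the state, the sender and the receiver, lies in $[\ell_{a_i},h_{a_i}]$). The receiver's (constrained) best response to $\varphi$ is a strategy satisfying these constraints that maximizes her expected utility $\mathbb{E}[u_R(\theta,a)]$ among all strategies satisfying the constraints, with ties broken in favor of the sender. The sender's expected utility under $\varphi$ is $\mathbb{E}_{\theta\sim\mu,\sigma\sim\varphi(\theta),a\sim\pi(\sigma)}[u_S(\theta,a)]$ with $\pi$ the receiver's best response; a sender-optimal scheme maximizes this quantity. *)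

(* Defs.v *)
From mathcomp Require Import all_boot all_order all_algebra.
From mathcomp Require Import reals.
Set Implicit Arguments. Unset Strict Implicit. Unset Printing Implicit Defensive.
Import Order.TTheory GRing.Theory Num.Theory.
Local Open Scope ring_scope.

Section Persuasion.
Variables (R : realType) (Theta A Sigma : finType).

Definition is_distr (T : finType) (p : T -> R) : Prop :=
  (forall t, 0 <= p t) /\ \sum_(t : T) p t = 1.

(* signaling scheme phi : Theta -> Delta(Sigma); phi th s = phi(s | th) *)
Definition is_scheme (phi : Theta -> Sigma -> R) : Prop :=
  forall th, is_distr (phi th).

Definition is_strategy (pi : Sigma -> A -> R) : Prop :=
  forall s, is_distr (pi s).

Definition sig_prob (mu : Theta -> R) (phi : Theta -> Sigma -> R) (s : Sigma) : R :=
  \sum_(th : Theta) mu th * phi th s.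

Definition feasible (mu : Theta -> R) (l h : A -> R)
    (phi : Theta -> Sigma -> R) (pi : Sigma -> A -> R) : Prop :=
  is_strategy pi /\
  forall a, l a <= \sum_(s : Sigma) sig_prob mu phi s * pi s a <= h a.

Definition exp_util (mu : Theta -> R) (u : Theta -> A -> R)
    (phi : Theta -> Sigma -> R) (pi : Sigma -> A -> R) : R :=
  \sum_(th : Theta) \sum_(s : Sigma) \sum_(a : A)
     mu th * phi th s * pi s a * u th a.

(* constrained best response, ties broken in favour of the sender *)
Definition best_response (mu : Theta -> R) (uS uR : Theta -> A -> R) (l h : A -> R)
    (phi : Theta -> Sigma -> R) (pi : Sigma -> A -> R) : Prop :=
  feasible mu l h phi pi /\
  (forall pi', feasible mu l h phi pi' ->
     exp_util mu uR phi pi' <= exp_util mu uR phi pi) /\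
  (forall pi', feasible mu l h phi pi' ->
     exp_util mu uR phi pi' = exp_util mu uR phi pi ->
     exp_util mu uS phi pi' <= exp_util mu uS phi pi).

Definition deterministic (pi : Sigma -> A -> R) : Prop :=
  forall s, exists a, forall a', pi s a' = (a' == a)%:R.

End Persuasion.

(* Main.v *)
Require Import Defs.
From mathcomp Require Import all_boot all_order all_algebra.
From mathcomp Require Import reals.
From Stdlib Require Import FunctionalExtensionality.
From mathcomp Require Import ring.
Import Order.TTheory GRing.Theory Num.Theory.
Local Open Scope ring_scope.

Lemma sum_ind1 (R : realType) (A : finType) (c : A) :
  \sum_(a : A) ((a == c)%:R : R) = 1.
Proof.
rewrite (bigD1 c) //= eqxx big1 ?addr0 // => a /negbTE -> //.
Qed.

Lemma sum_ind_mul (R : realType) (A : finType) (c : A) (F : A -> R) :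
  \sum_(a : A) F a * (a == c)%:R = F c.
Proof.
rewrite (bigD1 c) //= eqxx mulr1 big1 ?addr0 // => a /negbTE ->; by rewrite mulr0.
Qed.

Theorem proposition1 (R : realType) (Theta A Sigma : finType)
    (mu : Theta -> R) (uS uR : Theta -> A -> R) (l h : A -> R) :
  (#|A| <= #|Sigma|)%N ->
  is_distr mu ->
  (forall a, 0 <= l a /\ l a <= h a /\ h a <= 1) ->
  \sum_(a : A) l a <= 1 -> 1 <= \sum_(a : A) h a ->
  forall (phihat : Theta -> Sigma -> R) (pihat : Sigma -> A -> R),
    is_scheme phihat ->
    best_response mu uS uR l h phihat pihat ->
    exists (phi : Theta -> Sigma -> R) (pi : Sigma -> A -> R),
      [/\ is_scheme phi,
          best_response mu uS uR l h phi pi,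
          deterministic pi &
          exp_util mu uS phihat pihat <= exp_util mu uS phi pi].
Proof.
move=> hAS [mu0 mu1] _ _ _ phihat pihat hphi [[hpis hpic] [hbr1 hbr2]].
case: (pickP (@predT A)) => [a0 _|hA0]; last first.
  exfalso.
  case: (pickP (@predT Theta)) => [th _|hT]; last first.
    by move: mu1; rewrite big1 // => [/eqP|i _]; [rewrite eq_sym oner_eq0 | have := hT i].
  case: (pickP (@predT Sigma)) => [s _|hS]; last first.
    by move: (hphi th).2; rewrite big1 // => [/eqP|i _]; [rewrite eq_sym oner_eq0 | have := hS i].
  by move: (hpis s).2; rewrite big1 // => [/eqP|i _]; [rewrite eq_sym oner_eq0 | have := hA0 i].
pose f (b : A) : Sigma := enum_val (widen_ord hAS (enum_rank b)).
have finj : injective f.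
  by move=> x y /enum_val_inj/(congr1 val)/= /val_inj/enum_rank_inj.
pose g (s : Sigma) : A := odflt a0 [pick b | f b == s].
have gf : forall b, g (f b) = b.
  move=> b; rewrite /g; case: pickP => [b' /eqP /finj //|/(_ b)]; by rewrite eqxx.
pose phi th s := \sum_(b : A) (f b == s)%:R * (\sum_(s' : Sigma) phihat th s' * pihat s' b).
pose pi (s : Sigma) (a : A) : R := (a == g s)%:R.
pose rho (pi' : Sigma -> A -> R) s' a := \sum_(b : A) pihat s' b * pi' (f b) a.
have G : forall th (Z : Sigma -> R), \sum_s phi th s * Z s =
    \sum_s' phihat th s' * \sum_b pihat s' b * Z (f b).
  move=> th Z.
  transitivity (\sum_b (\sum_(s' : Sigma) phihat th s' * pihat s' b) * Z (f b)).
    rewrite /phi; under eq_bigr do rewrite mulr_suml.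
    rewrite exchange_big /=; apply: eq_bigr => b _.
    rewrite (bigD1 (f b)) //= eqxx mul1r [X in _ + X]big1 ?addr0 // => s /negbTE.
    by rewrite eq_sym => ->; rewrite mul0r mul0r.
  under eq_bigr do rewrite mulr_suml.
  rewrite exchange_big /=; apply: eq_bigr => s' _; rewrite mulr_sumr.
  by apply: eq_bigr => b _; rewrite mulrA.
have EU : forall u pi', exp_util mu u phi pi' = exp_util mu u phihat (rho pi').
  move=> u pi'; rewrite /exp_util; apply: eq_bigr => th _.
  transitivity (\sum_s phi th s * \sum_a mu th * pi' s a * u th a).
    by apply: eq_bigr => s _; rewrite mulr_sumr; apply: eq_bigr => a _; rewrite !mulrA [mu th * _]mulrC.
  rewrite G; apply: eq_bigr => s' _.
  transitivity (\sum_a \sum_b phihat th s' * (pihat s' b * (mu th * pi' (f b) a * u th a))).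
    rewrite exchange_big /= mulr_sumr; apply: eq_bigr => b _.
    by rewrite -!mulr_sumr.
  apply: eq_bigr => a _; rewrite /rho mulr_sumr mulr_suml; apply: eq_bigr => b _.
  ring.
have AP : forall pi' a, \sum_s sig_prob mu phi s * pi' s a =
    \sum_s' sig_prob mu phihat s' * rho pi' s' a.
  move=> pi' a; rewrite /sig_prob.
  under eq_bigr do rewrite mulr_suml.
  under [RHS]eq_bigr do rewrite mulr_suml.
  rewrite exchange_big [RHS]exchange_big /=; apply: eq_bigr => th _.
  transitivity (mu th * \sum_s phi th s * pi' s a).
    by rewrite mulr_sumr; apply: eq_bigr => s _; rewrite mulrA.
  rewrite G mulr_sumr; apply: eq_bigr => s' _; rewrite mulrA.
  by [].
have RS : forall pi', is_strategy pi' -> is_strategy (rho pi').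
  move=> pi' hs s'; split.
    move=> a; apply: sumr_ge0 => b _; apply: mulr_ge0; [exact: (hpis s').1 | exact: (hs _).1].
  rewrite /rho exchange_big /= -(hpis s').2; apply: eq_bigr => b _.
  by rewrite -mulr_sumr (hs (f b)).2 mulr1.
have RP : rho pi = pihat.
  apply: functional_extensionality => s'; apply: functional_extensionality => a.
  rewrite /rho /pi; under eq_bigr do rewrite gf eq_sym.
  exact: sum_ind_mul.
have RF : forall pi', feasible mu l h phi pi' -> feasible mu l h phihat (rho pi').
  move=> pi' [hs hc]; split; first exact: RS.
  by move=> a; rewrite -AP.
exists phi, pi; split.
- move=> th; split.
    move=> s; apply: sumr_ge0 => b _; apply: mulr_ge0; first exact: ler0n.
    apply: sumr_ge0 => s' _; apply: mulr_ge0; [exact: (hphi th).1 | exact: (hpis s').1].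
  transitivity (\sum_s phi th s * 1).
    by apply: eq_bigr => s _; rewrite mulr1.
  rewrite (G th (fun _ => 1)) /=; rewrite -[RHS](hphi th).2; apply: eq_bigr => s' _.
  transitivity (phihat th s' * \sum_b pihat s' b).
    by congr (_ * _); apply: eq_bigr => b _ /=; rewrite mulr1.
  by rewrite (hpis s').2 mulr1.
- have Fpi : feasible mu l h phi pi.
    split.
      move=> s; split; first by move=> a; exact: ler0n.
      exact: sum_ind1.
    by move=> a; rewrite AP RP.
  split; first exact: Fpi.
  split.
    by move=> pi' hf; rewrite !EU RP; apply: hbr1; exact: RF.
  by move=> pi' hf; rewrite !EU RP => he; apply: hbr2 => //; exact: RF.
- by move=> s; exists (g s).
- by rewrite EU RP.
Qed.
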